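(* For every finite word $\bar\alpha\in\{0,1\}^k$, $k\in\mathbb N$, the sets $F_{\bar\alpha}=T_{\bar\alpha}(I)$ and $\mathcal K_{\bar\alpha}$ are connected.
   Context: Let $I=[0,1]^3$. Let $\mathcal D_0=\{(i,2,2),(2,i,2),(2,2,i): i=0,1,2,3,4\}$ and $\mathcal D_1=\{d\in\{0,\ldots,4\}^3:\ \text{at least two coordinates of } d \text{ lie in }\{0,4\}\}$. For $i=0,1$ let $T_i(A)=\bigcup_{d\in\mathcal D_i}\frac{d+A}{5}$ for $A\subset\mathbb R^3$, and for $\bar\alpha=\alpha_1\cdots\alpha_k$ let $T_{\bar\alpha}=T_{\alpha_1}\circ\cdots\circ T_{\alpha_k}$. $\mathcal K_{\bar\alpha}$ is the unique non-empty compact set with $\mathcal K_{\bar\alpha}=T_{\bar\alpha}(\mathcal K_{\bar\alpha})$ (the attractor of the iterated function system whose Hutchinson operator is $T_{\bar\alpha}$). *)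

(* Defs.v *)
From HB Require Import structures.
From mathcomp Require Import all_boot all_order all_algebra.
From mathcomp Require Import all_classical all_reals all_analysis.
Set Implicit Arguments. Unset Strict Implicit. Unset Printing Implicit Defensive.
Import Order.TTheory GRing.Theory Num.Theory.
Import numFieldNormedType.Exports.
Local Open Scope classical_set_scope.
Local Open Scope ring_scope.

Definition cube (R : realType) : set 'rV[R]_3 :=
  [set x | forall j : 'I_3, 0 <= x ord0 j <= 1].

Definition digit := (nat * nat * nat)%type.

Definition dvec (R : realType) (d : digit) : 'rV[R]_3 :=
  \row_(j < 3) (match val j with
                | 0 => d.1.1 | 1 => d.1.2 | _ => d.2 end)%:R.

Definition D0 (d : digit) : Prop :=
  let: (a, b, c) := d in
  [\/ (a <= 4 /\ b = 2 /\ c = 2), (a = 2 /\ b <= 4 /\ c = 2)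
    | (a = 2 /\ b = 2 /\ c <= 4)]%N.

Definition edge (x : nat) : bool := (x == 0)%N || (x == 4)%N.

Definition D1 (d : digit) : Prop :=
  let: (a, b, c) := d in
  [/\ (a <= 4)%N, (b <= 4)%N, (c <= 4)%N &
      [|| edge a && edge b, edge a && edge c | edge b && edge c]].

(* Letter false encodes 0, true encodes 1. *)
Definition Dig (b : bool) : digit -> Prop := if b then D1 else D0.

Definition T (R : realType) (b : bool) (A : set 'rV[R]_3) : set 'rV[R]_3 :=
  [set y | exists d, Dig b d /\ exists2 a, A a & y = 5^-1 *: (dvec R d + a)].

Definition Tw (R : realType) (w : seq bool) (A : set 'rV[R]_3) : set 'rV[R]_3 :=
  foldr (@T R) A w.

Arguments cube R : clear implicits.
Arguments dvec R d : clear implicits.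

(* Main.v *)
Require Import Defs.
From HB Require Import structures.
From mathcomp Require Import all_boot all_order all_algebra.
From mathcomp Require Import all_classical all_reals all_analysis.
From mathcomp Require Import ring lra.
Import Order.TTheory GRing.Theory Num.Theory.
Import numFieldNormedType.Exports.
Local Open Scope classical_set_scope.
Local Open Scope ring_scope.
Set Implicit Arguments. Unset Strict Implicit. Unset Printing Implicit Defensive.
Section S.
Variable R : realType.
Notation vec := 'rV[R]_3.

Definition ej (j : 'I_3) : vec := \row_(k < 3) ((k == j)%:R).
Definition aff (d : digit) (a : vec) : vec := 5^-1 *: (dvec R d + a).

Lemma aff_cont d : continuous (aff d).
Proof.
move=> x; apply: continuousZl_tmp; apply: continuousD; first exact: cst_continuous.
exact: cvg_id.
Qed.

Lemma aff_conn d (A : set vec) : connected A -> connected (aff d @` A).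
Proof.
move=> cA; apply: connected_continuous_connected => //.
apply: continuous_subspaceT; exact: aff_cont.
Qed.

Lemma dvec_S0 a b c : dvec R (a.+1, b, c) = dvec R (a, b, c) + ej ord0.
Proof. by apply/rowP => k; rewrite !mxE; case: k => [[|[|[|k]]] Hk] //=; rewrite ?addr0 ?natr1. Qed.
Lemma dvec_S1 a b c : dvec R (a, b.+1, c) = dvec R (a, b, c) + ej (lift ord0 ord0).
Proof. by apply/rowP => k; rewrite !mxE; case: k => [[|[|[|k]]] Hk] //=; rewrite ?addr0 ?natr1. Qed.
Lemma dvec_S2 a b c : dvec R (a, b, c.+1) = dvec R (a, b, c) + ej ord_max.
Proof. by apply/rowP => k; rewrite !mxE; case: k => [[|[|[|k]]] Hk] //=; rewrite ?addr0 ?natr1. Qed.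

Lemma aff_shift d d' j a : dvec R d' = dvec R d + 4 *: ej j ->
  aff d' (a + ej j) = aff d a + ej j.
Proof.
move=> H; rewrite /aff H; apply/rowP => k; rewrite !mxE.
by field.
Qed.

Lemma aff_adj d d' j a : dvec R d' = dvec R d + ej j -> aff d (a + ej j) = aff d' a.
Proof. by move=> H; rewrite /aff H; apply/rowP => k; rewrite !mxE; ring. Qed.

Lemma cube_conn : connected (cube R).
Proof.
have -> : cube R = \bigcup_(x in cube R) ((fun t : R => t *: x) @` `[0, 1]%classic).
  apply/seteqP; split => [x cx|y [x cx [t t01 <-]]].
    exists x => //; exists 1; last by rewrite scale1r.
    by rewrite /= in_itv /= lexx ler01.
  move: t01; rewrite /= in_itv /= => /andP[t0 t1] j; rewrite mxE.
  have /andP[x0 x1] := cx j.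
  by apply/andP; split; [apply: mulr_ge0 | apply: mulr_ile1].
apply: bigcup_connected.
  exists 0 => x cx; exists 0; last by rewrite scale0r.
  by rewrite /= in_itv /= lexx ler01.
move=> x cx; apply: connected_continuous_connected; first exact: segment_connected.
apply: continuous_subspaceT => t.
exact: (@continuousZr_tmp _ _ _ (fun t => t) x t).
Qed.

Definition Inv (A : set vec) := connected A /\ forall j, exists2 a, A a & A (a + ej j).

Lemma good_step (U : set vec) p0 (C C' : set vec) :
  C `<=` connected_component U p0 -> C' `<=` U -> connected C' ->
  C `&` C' !=set0 -> C' `<=` connected_component U p0.
Proof.
move=> CU C'U cC' [q [Cq C'q]].
rewrite (same_connected_component (CU q Cq)).
exact: connected_component_max.
Qed.

Lemma line (G : digit -> Prop) (g : nat -> digit) n k :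
  (forall i, (i < n)%N -> G (g i) <-> G (g i.+1)) -> (k <= n)%N -> G (g k) ->
  forall i, (i <= n)%N -> G (g i).
Proof.
move=> st kn Gk.
have E : forall i, (i <= n)%N -> (G (g i) <-> G (g 0)).
  elim=> [|i IH] Hi; first by [].
  have := st i Hi; have := IH (ltnW Hi); tauto.
move=> i Hi; apply/(E i Hi)/(E k kn); exact: Gk.
Qed.

Section reach.
Variables (P G : digit -> Prop).
Hypothesis Hstep : forall d d' j, P d -> P d' -> dvec R d' = dvec R d + ej j ->
  (G d <-> G d').

Lemma xline a b c : G (a, b, c) -> (a <= 4)%N -> (forall i, (i <= 4)%N -> P (i, b, c)) ->
  forall i, (i <= 4)%N -> G (i, b, c).
Proof.
move=> Ga a4 HP; apply: (line (g := fun i => (i, b, c))) Ga => // i Hi.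
by apply: (Hstep (j := ord0)); [apply: HP; exact: ltnW | apply: HP | exact: dvec_S0].
Qed.
Lemma yline a b c : G (a, b, c) -> (b <= 4)%N -> (forall i, (i <= 4)%N -> P (a, i, c)) ->
  forall i, (i <= 4)%N -> G (a, i, c).
Proof.
move=> Ga a4 HP; apply: (line (g := fun i => (a, i, c))) Ga => // i Hi.
by apply: (Hstep (j := lift ord0 ord0)); [apply: HP; exact: ltnW | apply: HP | exact: dvec_S1].
Qed.
Lemma zline a b c : G (a, b, c) -> (c <= 4)%N -> (forall i, (i <= 4)%N -> P (a, b, i)) ->
  forall i, (i <= 4)%N -> G (a, b, i).
Proof.
move=> Ga a4 HP; apply: (line (g := fun i => (a, b, i))) Ga => // i Hi.
by apply: (Hstep (j := ord_max)); [apply: HP; exact: ltnW | apply: HP | exact: dvec_S2].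
Qed.
End reach.

Lemma reach0 (G : digit -> Prop) :
  (forall d d' j, D0 d -> D0 d' -> dvec R d' = dvec R d + ej j -> (G d <-> G d')) ->
  G (2, 2, 2)%N -> forall d, D0 d -> G d.
Proof.
move=> Hs G2 [[a b] c] /= [[a4 [-> ->]]|[-> [b4 ->]]|[-> [-> c4]]].
- apply: (xline Hs G2) => // i Hi; by apply: Or31.
- apply: (yline Hs G2) => // i Hi; by apply: Or32.
- apply: (zline Hs G2) => // i Hi; by apply: Or33.
Qed.

Lemma reach1 (G : digit -> Prop) :
  (forall d d' j, D1 d -> D1 d' -> dvec R d' = dvec R d + ej j -> (G d <-> G d')) ->
  G (0, 0, 0)%N -> forall d, D1 d -> G d.
Proof.
move=> Hs G0 [[a b] c] /= [a4 b4 c4 /or3P[/andP[ea eb]|/andP[ea ec]|/andP[eb ec]]].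
- have Ga : G (a, 0, 0)%N.
    by apply: (xline Hs G0) => // i Hi; split => //; rewrite /= ?orbT.
  have Gb : G (a, b, 0)%N.
    by apply: (yline Hs Ga) => // i Hi; split => //; rewrite /= ?ea ?orbT.
  by apply: (zline Hs Gb) => // i Hi; split => //; rewrite /= ?ea ?eb ?orbT.
- have Ga : G (a, 0, 0)%N.
    by apply: (xline Hs G0) => // i Hi; split => //; rewrite /= ?orbT.
  have Gc : G (a, 0, c)%N.
    by apply: (zline Hs Ga) => // i Hi; split => //; rewrite /= ?ea ?orbT.
  by apply: (yline Hs Gc) => // i Hi; split => //; rewrite /= ?ea ?ec ?orbT.
- have Gb : G (0, b, 0)%N.
    by apply: (yline Hs G0) => // i Hi; split => //; rewrite /= ?orbT.
  have Gc : G (0, b, c)%N.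
    by apply: (zline Hs Gb) => // i Hi; split => //; rewrite /= ?eb ?orbT.
  by apply: (xline Hs Gc) => // i Hi; split => //; rewrite /= ?eb ?ec ?orbT.
Qed.

Lemma reach b : exists2 d0, Dig b d0 & forall G : digit -> Prop,
  (forall d d' j, Dig b d -> Dig b d' -> dvec R d' = dvec R d + ej j -> (G d <-> G d')) ->
  G d0 -> forall d, Dig b d -> G d.
Proof.
case: b.
- by exists (0, 0, 0)%N; [split | exact: reach1].
- by exists (2, 2, 2)%N; [apply: Or31 | exact: reach0].
Qed.

Lemma pairs b j : exists d, exists d',
  [/\ Dig b d, Dig b d' & dvec R d' = dvec R d + 4 *: ej j].
Proof.
have E : forall d d', (forall k : 'I_3, dvec R d' ord0 k = dvec R d ord0 k + 4 * (k == j)%:R) ->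
   dvec R d' = dvec R d + 4 *: ej j.
  by move=> d d' H; apply/rowP => k; rewrite [LHS]H !mxE.
case: b; move: E; case: j => [[|[|[|j]]] Hj] E //.
- exists (0, 0, 0)%N, (4, 0, 0)%N; split => //; apply: E => -[[|[|[|k]]] Hk]; rewrite !mxE //=; ring.
- exists (0, 0, 0)%N, (0, 4, 0)%N; split => //; apply: E => -[[|[|[|k]]] Hk]; rewrite !mxE //=; ring.
- exists (0, 0, 0)%N, (0, 0, 4)%N; split => //; apply: E => -[[|[|[|k]]] Hk]; rewrite !mxE //=; ring.
- exists (0, 2, 2)%N, (4, 2, 2)%N; split; [exact: Or31|exact: Or31|]; apply: E => -[[|[|[|k]]] Hk]; rewrite !mxE //=; ring.
- exists (2, 0, 2)%N, (2, 4, 2)%N; split; [exact: Or32|exact: Or32|]; apply: E => -[[|[|[|k]]] Hk]; rewrite !mxE //=; ring.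
- exists (2, 2, 0)%N, (2, 2, 4)%N; split; [exact: Or33|exact: Or33|]; apply: E => -[[|[|[|k]]] Hk]; rewrite !mxE //=; ring.
Qed.

Lemma T_Inv b A : Inv A -> Inv (T b A).
Proof.
case=> cA pA.
have [a0 Aa0 _] := pA ord0.
have sub : forall d, Dig b d -> aff d @` A `<=` T b A.
  by move=> d Dd _ [a Aa <-]; exists d; split => //; exists a.
split; last first.
  move=> j; have [d [d' [Dd Dd' e]]] := pairs b j; have [a Aa Aaj] := pA j.
  exists (aff d a); first by apply: (sub d Dd); exists a.
  rewrite -(aff_shift _ e); apply: (sub d' Dd'); by exists (a + ej j).
have [d0 Dd0 Hreach] := reach b.
pose p0 := aff d0 a0.
pose G d := aff d @` A `<=` connected_component (T b A) p0.
have Hs : forall d d' j, Dig b d -> Dig b d' -> dvec R d' = dvec R d + ej j -> (G d <-> G d').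
  move=> d d' j Dd Dd' e; have [a Aa Aaj] := pA j.
  have I : aff d @` A `&` aff d' @` A !=set0.
    exists (aff d (a + ej j)); split; first by exists (a + ej j).
    by rewrite (aff_adj _ e); exists a.
  split=> HG.
  - exact: (good_step HG (sub _ Dd') (aff_conn (d:=d') cA) I).
  - by apply: (good_step HG (sub _ Dd) (aff_conn (d:=d) cA)); rewrite setIC.
have G0 : G d0.
  apply: connected_component_max; [by exists a0 | exact: sub | exact: aff_conn].
have allG := Hreach G Hs G0.
have E : connected_component (T b A) p0 = T b A.
  apply/seteqP; split; first exact: connected_component_sub.
  move=> y [d [Dd [a Aa ->]]]; apply: (allG d Dd); by exists a.
rewrite -E; exact: component_connected.
Qed.

Lemma part1 w : Inv (Tw w (cube R)).
Proof.
elim: w => [|b w IH] /=.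
  split; first exact: cube_conn.
  move=> j; exists 0.
    by move=> k; rewrite mxE lexx ler01.
  move=> k; rewrite !mxE add0r; case: (k == j) => /=; rewrite ?lexx ?ler01 //.
exact: T_Inv.
Qed.

Fixpoint Tr (w : seq bool) : set vec :=
  if w is b :: w' then
    [set y | exists d, Dig b d /\ exists2 t, Tr w' t & y = 5^-1 *: (dvec R d + t)]
  else [set 0].

Definition rr (w : seq bool) : R := (5^-1) ^+ size w.

Lemma Tw_rep1 w A y : Tw w A y -> exists2 t, Tr w t & exists2 a, A a & y = t + rr w *: a.
Proof.
elim: w y => [|b w IH] y /=.
  by move=> Ay; exists 0 => //; exists y => //; rewrite /rr expr0 scale1r add0r.
move=> [d [Dd [z /IH [t Tt [a Aa ->]] ->]]].
exists (5^-1 *: (dvec R d + t)); first by exists d; split => //; exists t.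
exists a => //; rewrite /rr /= exprS; apply/rowP => k; rewrite !mxE; ring.
Qed.

Lemma Tw_rep2 w A t a : Tr w t -> A a -> Tw w A (t + rr w *: a).
Proof.
elim: w t => [|b w IH] t /=.
  by move=> -> Aa; rewrite /rr expr0 scale1r add0r.
move=> [d [Dd [t' Tt' ->]]] Aa.
exists d; split => //; exists (t' + rr w *: a); first exact: IH.
rewrite /rr /= exprS; apply/rowP => k; rewrite !mxE; ring.
Qed.

Fixpoint pw (w : seq bool) n := if n is n'.+1 then w ++ pw w n' else [::].

Lemma Tw_cat u v (A : set vec) : Tw (u ++ v) A = Tw u (Tw v A).
Proof. by rewrite /Tw foldr_cat. Qed.

Lemma K_fix w (K : set vec) n : K = Tw w K -> K = Tw (pw w n) K.
Proof.
move=> HK; elim: n => [|n IH] //=.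
by rewrite Tw_cat -IH.
Qed.

Lemma size_pw w n : size (pw w n) = (n * size w)%N.
Proof. by elim: n => [|n IH] //=; rewrite size_cat IH mulSn. Qed.

Lemma coord_le_norm (x : vec) j : `|x ord0 j| <= `|x|.
Proof.
have /mapP[i Hi ->] : `|x ord0 j| \in [seq `|x ij.1 ij.2| | ij : 'I_1 * 'I_3].
  by apply/mapP; exists (ord0, j) => //=; rewrite mem_enum.
by rewrite (_ : `|x| = mx_norm x) // mx_normrE; apply/bigmax_geP; right => /=; exists i.
Qed.

Lemma sep_seq (s : seq (vec * R)) : (forall p, p \in s -> 0 < p.2) ->
  exists2 e, 0 < e & forall p, p \in s -> e <= p.2.
Proof.
elim: s => [|p s IH] H; first by exists 1.
have [e e0 He] := IH (fun q qs => H q (mem_behead (s := p :: s) qs)).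
have p0 := H p (mem_head _ _).
exists (Num.min p.2 e); first by rewrite lt_min p0 e0.
move=> q; rewrite in_cons => /orP[/eqP ->|qs]; first by rewrite ge_min lexx.
by rewrite ge_min He ?orbT.
Qed.

Lemma not_closure_ball (E : set vec) x : ~ closure E x ->
  exists2 d, 0 < d & ball x d `&` E = set0.
Proof.
move=> ncl; have [B nB EB] : exists2 B, nbhs x B & E `&` B = set0.
  apply: contrapT => H; apply: ncl => B nB; apply/set0P/negP => /eqP EB; apply: H; by exists B.
have [d d0 dB] := (nbhs_ballP x B).1 nB.
exists d => //; apply/seteqP; split => // y [bxy Ey].
have : (E `&` B) y by split => //; exact: dB.
by rewrite EB.
Qed.

Lemma sep (K E0 E1 : set vec) : compact K -> K = E0 `|` E1 -> separated E0 E1 ->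
  exists2 e, 0 < e & forall a b, E0 a -> E1 b -> ~ ball a e b.
Proof.
move=> cK KE [sE1 sE2].
pose D := [set p : vec * R | 0 < p.2 /\
  ((E0 p.1 /\ ball p.1 (2 * p.2) `&` E1 = set0) \/
   (E1 p.1 /\ ball p.1 (2 * p.2) `&` E0 = set0))].
have : K `<=` cover D (fun p => ball p.1 p.2).
  move=> x; rewrite KE => -[E0x|E1x].
    have nc : ~ closure E1 x.
      by move=> cx; have : (E0 `&` closure E1) x by []; rewrite sE2.
    have [d d0 Hd] := not_closure_ball nc.
    exists (x, d / 2); last by apply: ballxx; rewrite /= divr_gt0.
    split; first by rewrite /= divr_gt0.
    by left; split => //=; rewrite mulrC divfK ?pnatr_eq0.
  have nc : ~ closure E0 x.
    by move=> cx; have : (closure E0 `&` E1) x by []; rewrite sE1.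
  have [d d0 Hd] := not_closure_ball nc.
  exists (x, d / 2); last by apply: ballxx; rewrite /= divr_gt0.
  split; first by rewrite /= divr_gt0.
  by right; split => //=; rewrite mulrC divfK ?pnatr_eq0.
rewrite compact_cover in cK.
move=> /(cK _ D (fun p => ball p.1 p.2)) [].
  by move=> p _; exact: ball_open.
move=> D' D'D KD'.
have [e e0 He] := sep_seq (s := finmap.enum_fset D') (fun p pD => (set_mem (D'D p pD)).1).
exists e => // a b E0a E1b bab.
have [p /= pD' bpa] := KD' a (eq_ind_r (fun X => X a) (or_introl E0a) KE).
have [p0 Hp] := set_mem (D'D p pD').
have bpb : ball p.1 (2 * p.2) b.
  apply: (le_ball (e1 := p.2 + e)); last exact: ball_triangle bpa bab.
  by rewrite mulr2n mulrDl mul1r lerD2l He.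
case: Hp => -[_ Hb].
  by have : (ball p.1 (2 * p.2) `&` E1) b by []; rewrite Hb.
have : (ball p.1 (2 * p.2) `&` E0) a; last by rewrite Hb.
split => //; apply: (le_ball (e1 := p.2)) => //.
by rewrite mulr2n mulrDl mul1r lerDl ltW.
Qed.

Lemma ballP3 (x y : vec) e : ball x e y <-> (0 < e /\ forall j, `|x ord0 j - y ord0 j| < e).
Proof.
split.
  case=> e0 H; split=> // j; have := H ord0 j. by [].
case=> e0 H; split=> // i j; rewrite (ord1 i); exact: H.
Qed.

Lemma ball_aff t (a b : vec) r e B : 0 <= r -> (forall j, `|a ord0 j| <= B) ->
  (forall j, `|b ord0 j| <= 1) -> r * (B + 1) < e -> ball (t + r *: a) e (t + r *: b).
Proof.
move=> r0 Ha Hb H.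
have B0 : 0 <= B by apply: le_trans (Ha ord0).
apply/ballP3; split.
  by apply: le_lt_trans H; apply: mulr_ge0 => //; rewrite addr_ge0.
move=> j; rewrite !mxE.
have -> : t ord0 j + r * a ord0 j - (t ord0 j + r * b ord0 j) = r * (a ord0 j - b ord0 j) by ring.
rewrite normrM ger0_norm //; apply: le_lt_trans H; apply: ler_wpM2l => //.
by apply: le_trans (ler_normB _ _) _; apply: lerD.
Qed.

Lemma part2 w (K : set vec) : w != [::] -> K !=set0 -> compact K -> K = Tw w K ->
  connected K.
Proof.
move=> w0 [a0 Ka0] cK HK.
apply: contrapT => /connectedPn [E [En KE sE]].
have [eps eps0 Hsep] := sep cK KE sE.
have [M [_ MK]] := compact_bounded cK.
pose B := `|M| + 1.
have KB : forall x, K x -> forall j, `|x ord0 j| <= B.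
  move=> x Kx j; apply: le_trans (coord_le_norm x j) _; apply: (MK B) => //.
  by rewrite /B; have := ler_norm M; lra.
have B0 : 0 <= B by rewrite /B addr_ge0.
pose C := B + 1.
pose n := Num.truncn (2 * C / eps).
pose u := pw w n.
have Hr : rr u * C < eps / 2.
  have m_ge : (n.+1 <= 5 ^ size u)%N.
    rewrite size_pw; apply: (leq_ltn_trans _ (ltn_expl _ (isT : (1 < 5)%N))).
    by apply: leq_pmulr; rewrite lt0n size_eq0.
  have -> : rr u = ((5 ^ size u)%N%:R)^-1 by rewrite /rr exprVn natrX.
  set P := ((5 ^ size u)%N%:R : R).
  have P0 : 0 < P by rewrite /P ltr0n expn_gt0.
  have h1 : 2 * C / eps < P.
    apply: lt_le_trans (truncnS_gt _) _; by rewrite /P ler_nat.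
  rewrite ltr_pdivrMr // in h1.
  rewrite mulrC ltr_pdivrMr //; nra.
have rr0 : 0 <= rr u by rewrite /rr exprn_ge0 // invr_ge0.
have Fc := (part1 u).1.
have HKu : K = Tw u K := K_fix n HK.
have cube0 : cube R 0 by move=> j; rewrite mxE lexx ler01.
have cubeB : forall b, cube R b -> forall j, `|b ord0 j| <= 1.
  by move=> b cb j; have /andP[b0 b1] := cb j; rewrite ger0_norm.
have F1 : forall y, Tw u (cube R) y -> exists2 k, K k & ball k (eps / 2) y.
  move=> y /Tw_rep1 [t Tt [b cb ->]]; exists (t + rr u *: a0).
    by rewrite HKu; exact: Tw_rep2.
  by apply: (@ball_aff _ _ _ _ _ B) => //; [exact: KB | exact: cubeB].
have F2 : forall k, K k -> exists2 y, Tw u (cube R) y & ball k (eps / 2) y.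
  move=> k; rewrite {1}HKu => /Tw_rep1 [t Tt [a Ka ->]]; exists (t + rr u *: 0).
    exact: Tw_rep2.
  by apply: (@ball_aff _ _ _ _ _ B) => //; [exact: KB | exact: cubeB].
pose U0 := \bigcup_(a in E false) ball a (eps / 2).
pose U1 := \bigcup_(a in E true) ball a (eps / 2).
have oU0 : open U0 by apply: bigcup_open => a _; exact: ball_open.
have oU1 : open U1 by apply: bigcup_open => a _; exact: ball_open.
have disj : forall y, U0 y -> U1 y -> False.
  move=> y [a Ea bay] [b Eb bby]; apply: (Hsep a b Ea Eb).
  by rewrite (splitr eps); apply: ball_triangle bay (ball_sym bby).
have := Fc (Tw u (cube R) `&` U0).
have [a Ea] := En false.
have [b Eb] := En true.
have Ka : K a by rewrite KE; left.
have Kb : K b by rewrite KE; right.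
move=> /(_ _ _ _) EQ.
have [y Fy bby] := F2 b Kb.
have : (Tw u (cube R) `&` U0) y.
  rewrite EQ //.
  - by have [y' Fy' bay'] := F2 a Ka; exists y'; split => //; exists a.
  - by exists U0.
  exists (~` U1); first exact: open_closedC.
  apply/seteqP; split => z [Fz Hz]; split => //.
    by move=> U1z; exact: disj Hz U1z.
  have [k Kk bkz] := F1 z Fz.
  move: Kk; rewrite KE => -[Ek|Ek]; first by exists k.
  by exfalso; apply: Hz; exists k.
by case=> _ U0y; apply: disj U0y _; exists b.
Qed.
End S.

Unset Implicit Arguments.

Theorem lemma1 (R : realType) (w : seq bool) :
  connected (Tw w (cube R) : set 'rV[R]_3) /\
  (w != [::] ->
   forall K : set 'rV[R]_3,
     K !=set0 -> compact K -> K = Tw w K -> connected K).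
Proof.
split; first exact: (part1 R w).1.
by move=> w0 K K0 cK HK; exact: part2 w0 K0 cK HK.
Qed.
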